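(* Let $\mathcal S \subseteq \mathsf P^n$ be the stabilizer group of an $n$-qubit stabilizer code and $\mathcal L = \mathcal S^\perp$ its group of logical operators. Let $\Gamma \subseteq 2^{\{1,\dots,n\}}$ be a set of supports, and consider Pauli channels of the form $P = \mathop{\ast}_{\gamma\in\Gamma} P_\gamma$ (convolution over $\gamma \in \Gamma$), where each $P_\gamma$ is a probability distribution on $\mathsf P^n$ with $P_\gamma(e)=0$ whenever $\operatorname{supp}(e)\not\subseteq\gamma$. Call such a $P$ correctable if (i) for all $\gamma_1,\gamma_2\in\Gamma$ the region $\gamma_1\cup\gamma_2$ is correctable, and (ii) $P(I)>\tfrac12$. Then for a correctable channel $P$ the logical channel $$P_L(e)=\frac{1}{|\mathcal S|}\sum_{s\in\mathcal S}P(es),\qquad e\in\mathsf P^n,$$ is uniquely determined by the stabilizer expectations (syndrome statistics) $E(s)=\sum_{e\in\mathsf P^n}\langle s,e\rangle P(e)$, $s\in\mathcal S$. That is, if $P$ and $P'$ are two correctable channels with the same set of supports $\Gamma$ and $\sum_e\langle s,e\rangle P(e)=\sum_e\langle s,e\rangle P'(e)$ for all $s\in\mathcal S$, then $P_L=P'_L$.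
   Context: $\mathsf P^n$ denotes the effective $n$-qubit Pauli group, i.e. the $n$-qubit Pauli group modulo phases $\{\pm1,\pm i\}$; it is Abelian. For $a,e\in\mathsf P^n$, $\langle a,e\rangle=+1$ if $a$ and $e$ commute in the Pauli group and $-1$ if they anticommute. For a subgroup $B$, $B^\perp=\{a\in\mathsf P^n:\langle a,b\rangle=+1\ \forall b\in B\}$. A stabilizer group is a subgroup $\mathcal S$ with $\mathcal S\subseteq\mathcal S^\perp$ (coming from a commuting subgroup of the Pauli group not containing $-I$). The support $\operatorname{supp}(e)$ is the set of qubits on which $e$ acts nontrivially. A region $R\subseteq\{1,\dots,n\}$ is correctable if every $l\in\mathcal L$ with $\operatorname{supp}(l)\subseteq R$ lies in $\mathcal S$. Convolution of functions on $\mathsf P^n$: $(f\ast g)(e)=\sum_{e'}f(e')g(ee')$. *)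

(* Defs.v *)
From HB Require Import structures.
From mathcomp Require Import all_boot all_order all_algebra.
From mathcomp Require Import reals.
Set Implicit Arguments. Unset Strict Implicit. Unset Printing Implicit Defensive.
Import Order.TTheory GRing.Theory Num.Theory.
Local Open Scope ring_scope.

(* Effective n-qubit Pauli group P^n (Paulis modulo phases): each qubit carries
   a pair (x,z) of bits, I=(0,0), X=(1,0), Z=(0,1), Y=(1,1). *)
Definition Pauli (n : nat) := {ffun 'I_n -> bool * bool}.

Definition pid (n : nat) : Pauli n := [ffun _ => (false, false)].

Definition pmul (n : nat) (a b : Pauli n) : Pauli n :=
  [ffun i => (((a i).1 (+) (b i).1), ((a i).2 (+) (b i).2))].

Definition anticomm (n : nat) (a e : Pauli n) : bool :=
  \big[addb/false]_(i < n) ((((a i).1 && (e i).2)) (+) ((a i).2 && (e i).1)).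

Definition pair_sign (R : realType) (n : nat) (a e : Pauli n) : R :=
  if anticomm a e then -1 else 1.

Definition supp (n : nat) (e : Pauli n) : {set 'I_n} :=
  [set i | e i != (false, false)].

Definition perp (n : nat) (B : {set Pauli n}) : {set Pauli n} :=
  [set a | [forall b in B, ~~ anticomm a b]].

Definition is_subgroup (n : nat) (S : {set Pauli n}) : Prop :=
  pid n \in S /\ (forall a b, a \in S -> b \in S -> pmul a b \in S).

Definition stabilizer_group (n : nat) (S : {set Pauli n}) : Prop :=
  is_subgroup S /\ S \subset perp S.

Definition correctable_region (n : nat) (S : {set Pauli n}) (Rg : {set 'I_n}) : Prop :=
  forall l, l \in perp S -> supp l \subset Rg -> l \in S.

Definition conv (R : realType) (n : nat) (f g : Pauli n -> R) : Pauli n -> R :=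
  fun e => \sum_(e' : Pauli n) f e' * g (pmul e e').

Definition delta_id (R : realType) (n : nat) : Pauli n -> R :=
  fun e => if e == pid n then 1 else 0.

Definition conv_family (R : realType) (n : nat) (Gamma : {set {set 'I_n}})
  (Pg : {set 'I_n} -> Pauli n -> R) : Pauli n -> R :=
  \big[(fun f g => conv f g)/(@delta_id R n)]_(g in Gamma) Pg g.

Definition is_distribution (R : realType) (n : nat) (p : Pauli n -> R) : Prop :=
  (forall e, 0 <= p e) /\ \sum_(e : Pauli n) p e = 1.

Definition local_family (R : realType) (n : nat) (Gamma : {set {set 'I_n}})
  (Pg : {set 'I_n} -> Pauli n -> R) : Prop :=
  forall g, g \in Gamma ->
    is_distribution (Pg g) /\ (forall e, ~~ (supp e \subset g) -> Pg g e = 0).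

Definition correctable_channel (R : realType) (n : nat) (S : {set Pauli n})
  (Gamma : {set {set 'I_n}}) (Pg : {set 'I_n} -> Pauli n -> R) : Prop :=
  local_family Gamma Pg /\
  (forall g1 g2, g1 \in Gamma -> g2 \in Gamma -> correctable_region S (g1 :|: g2)) /\
  conv_family Gamma Pg (pid n) > 1 / 2.

Definition stab_expect (R : realType) (n : nat) (P : Pauli n -> R) (s : Pauli n) : R :=
  \sum_(e : Pauli n) pair_sign R s e * P e.

Definition logical_channel (R : realType) (n : nat) (S : {set Pauli n})
  (P : Pauli n -> R) (e : Pauli n) : R :=
  (#|S|%:R)^-1 * \sum_(s in S) P (pmul e s).

(* Main.v *)
Require Import Defs.
From HB Require Import structures.
From mathcomp Require Import all_boot all_order all_algebra.
From mathcomp Require Import reals exp lra ring.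
Set Implicit Arguments. Unset Strict Implicit. Unset Printing Implicit Defensive.
Import Order.TTheory GRing.Theory Num.Theory.
Local Open Scope ring_scope.

Section Pauli.
Variable n : nat.
Implicit Types a b e x : Pauli n.

Lemma pmulC a b : pmul a b = pmul b a.
Proof. by apply/ffunP=> i; rewrite !ffunE addbC [(a i).2 (+) _]addbC. Qed.

Lemma pmulA a b e : pmul a (pmul b e) = pmul (pmul a b) e.
Proof. by apply/ffunP=> i; rewrite !ffunE /= !addbA. Qed.

Lemma pmulxx a : pmul a a = pid n.
Proof. by apply/ffunP=> i; rewrite !ffunE !addbb. Qed.

Lemma pmul1x a : pmul (pid n) a = a.
Proof. by apply/ffunP=> i; rewrite !ffunE /=; case: (a i). Qed.

Lemma pmulK a b : pmul a (pmul a b) = b.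
Proof. by rewrite pmulA pmulxx pmul1x. Qed.

Lemma anticommC a b : anticomm a b = anticomm b a.
Proof.
rewrite /anticomm; apply: eq_bigr => i _.
by case: (a i) => [[] []]; case: (b i) => [[] []].
Qed.

Lemma anticommMl a b e : anticomm (pmul a b) e = anticomm a e (+) anticomm b e.
Proof.
rewrite /anticomm -big_split /=; apply: eq_bigr => i _; rewrite ffunE /=.
by case: (a i) => [[] []]; case: (b i) => [[] []]; case: (e i) => [[] []].
Qed.

Lemma anticommMr a b e : anticomm e (pmul a b) = anticomm e a (+) anticomm e b.
Proof. by rewrite anticommC anticommMl !(anticommC e). Qed.

Lemma anticomm_disj a e :
  (forall i, a i = (false, false) \/ e i = (false, false)) -> anticomm a e = false.
Proof.
move=> H; rewrite /anticomm big1 // => i _.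
by case: (H i) => ->; case: (a i) => [[] []]; case: (e i) => [[] []].
Qed.

Lemma anticomm1 e : anticomm (pid n) e = false.
Proof. by apply: anticomm_disj => i; left; rewrite ffunE. Qed.

Lemma exists_anti e i : e i != (false, false) ->
  exists a0 : Pauli n, (forall j, j != i -> a0 j = (false, false)) /\ anticomm a0 e.
Proof.
move=> Hi.
exists [ffun j => if j == i then (if (e i).1 then (false, true) else (true, false))
                  else (false, false)]; split.
  by move=> j /negPf Hj; rewrite ffunE Hj.
rewrite /anticomm (bigD1 i) //= big1 => [|j Hj]; last by rewrite ffunE (negPf Hj).
rewrite ffunE eqxx addbF.
by move: Hi; case: (e i) => [[] []].
Qed.

Lemma supp_pmul a b : supp (pmul a b) \subset supp a :|: supp b.
Proof.
apply/subsetP=> i; rewrite !inE ffunE.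
by case: (a i) => [[] []]; case: (b i) => [[] []].
Qed.

End Pauli.
Section Fourier.
Variables (R : realType) (n : nat).
Implicit Types a b e x : Pauli n.
Local Notation chi := (pair_sign R).

Definition four (f : Pauli n -> R) a := \sum_e chi a e * f e.

Lemma chiC a b : chi a b = chi b a.
Proof. by rewrite /pair_sign anticommC. Qed.

Lemma chiMl a b e : chi (pmul a b) e = chi a e * chi b e.
Proof.
rewrite /pair_sign anticommMl.
by case: (anticomm a e); case: (anticomm b e); rewrite /= ?mulN1r ?mul1r ?opprK.
Qed.

Lemma chiMr a b e : chi e (pmul a b) = chi e a * chi e b.
Proof. by rewrite chiC chiMl !(chiC e). Qed.

Lemma chi1 e : chi (pid n) e = 1.
Proof. by rewrite /pair_sign anticomm1. Qed.

Lemma chi_sum (H : {set Pauli n}) x :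
  pid n \in H -> (forall a b, a \in H -> b \in H -> pmul a b \in H) ->
  \sum_(h in H) chi x h = if x \in perp H then #|H|%:R else 0.
Proof.
move=> H1 HM; case: ifP => Hx.
  rewrite -sumr_const; apply: eq_bigr => h hH.
  move: Hx; rewrite inE => /forallP /(_ h); rewrite hH /= => /negPf.
  by rewrite /pair_sign => ->.
move: Hx; rewrite inE => /negbT; rewrite negb_forall => /existsP [h0].
rewrite negb_imply negbK => /andP [h0H Hanti].
have Hc : chi x h0 = -1 by rewrite /pair_sign Hanti.
have inj : injective (pmul h0) by move=> u v E; rewrite -(pmulK h0 u) E pmulK.
set s := \sum_(h in H) _.
have : s = - s.
  have E : s = \sum_(h in H) chi x (pmul h0 h).
    rewrite /s (reindex_inj inj) /=; apply: eq_bigl => h.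
    apply/idP/idP => Hh; last by apply: HM.
    by rewrite -(pmulK h0 h); apply: HM.
  rewrite {1}E /s -sumrN; apply: eq_bigr => h _.
  by rewrite chiMr Hc mulN1r.
move/eqP; rewrite -addr_eq0 -mulr2n -mulr_natr mulf_eq0 pnatr_eq0 orbF.
by move/eqP.
Qed.

Lemma perpT x : (x \in perp [set: Pauli n]) = (x == pid n).
Proof.
apply/idP/eqP => [|->].
  rewrite inE => /forallP Hx; apply/ffunP => i; rewrite ffunE.
  apply/eqP/negPn/negP => Hi.
  have [a0 [_ Ha]] := exists_anti Hi.
  by move: (Hx a0); rewrite in_setT anticommC Ha.
by rewrite inE; apply/forallP => b; rewrite anticomm1 implybT.
Qed.

Definition NN : R := #|Pauli n|%:R.

Lemma NN_neq0 : NN != 0.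
Proof. by rewrite pnatr_eq0 -lt0n; apply/card_gt0P; exists (pid n). Qed.

Lemma chi_sumT y : \sum_a chi y a = if y == pid n then NN else 0.
Proof.
have := @chi_sum [set: Pauli n] y (in_setT _) (fun _ _ _ _ => in_setT _).
by rewrite perpT cardsT => <-; apply: eq_bigl => a; rewrite in_setT.
Qed.

Lemma four_inv (f : Pauli n -> R) x : f x = NN^-1 * \sum_a chi a x * four f a.
Proof.
apply: (mulfI NN_neq0); rewrite mulrA mulfV; last exact: NN_neq0.
rewrite mul1r /four.
transitivity (\sum_e f e * \sum_a chi (pmul x e) a).
  rewrite (bigD1 x) //= pmulxx chi_sumT eqxx big1 ?addr0; first by rewrite mulrC.
  move=> e /negPf Hne; rewrite chi_sumT; case: eqP => [E|]; last by rewrite mulr0.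
  by move: Hne; rewrite -(pmulK x e) E pmulC pmul1x eqxx.
under eq_bigr => e _ do rewrite big_distrr.
rewrite exchange_big; apply: eq_bigr => a _.
rewrite big_distrr; apply: eq_bigr => e _.
by rewrite chiMl !(chiC a) /= mulrCA [f e * _]mulrC.
Qed.

Lemma four_conv (f g : Pauli n -> R) a : four (conv f g) a = four f a * four g a.
Proof.
rewrite /four /conv.
under eq_bigr => x _ do rewrite big_distrr.
rewrite exchange_big big_distrl; apply: eq_bigr => e _.
have inj : injective (pmul e) by move=> u v E; rewrite -(pmulK e u) E pmulK.
rewrite (reindex_inj inj) big_distrr; apply: eq_bigr => y _ /=.
by rewrite (pmulC (pmul e y)) pmulK chiMr -!mulrA; congr (_ * _); rewrite mulrCA.
Qed.

Lemma four_delta a : four (@delta_id R n) a = 1.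
Proof.
rewrite /four (bigD1 (pid n)) //= big1 => [|e /negPf He].
  by rewrite /delta_id eqxx chiC chi1 mulr1 addr0.
by rewrite /delta_id He mulr0.
Qed.

Lemma four_family (Gamma : {set {set 'I_n}}) Pg a :
  four (conv_family Gamma Pg) a = \prod_(g in Gamma) four (Pg g) a.
Proof.
rewrite /conv_family.
have M : {morph (fun p => four p a) : f g / conv f g >-> f * g}.
  by move=> f g; exact: four_conv.
exact: (big_morph _ M (four_delta a)).
Qed.

Lemma conv_ge0 (f g : Pauli n -> R) :
  (forall e, 0 <= f e) -> (forall e, 0 <= g e) -> forall e, 0 <= conv f g e.
Proof.
by move=> Hf Hg e; rewrite /conv; apply: sumr_ge0 => x _; apply: mulr_ge0.
Qed.

Lemma family_ge0 (Gamma : {set {set 'I_n}}) (Pg : {set 'I_n} -> Pauli n -> R) :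
  (forall g, g \in Gamma -> forall e, 0 <= Pg g e) ->
  forall e, 0 <= conv_family Gamma Pg e.
Proof.
move=> H; rewrite /conv_family.
apply: (big_ind (fun p : Pauli n -> R => forall e, 0 <= p e)).
- by move=> e; rewrite /delta_id; case: eqP.
- by move=> f g; apply: conv_ge0.
- by move=> g Hg; apply: H.
Qed.

Lemma four_pos (P : Pauli n -> R) a :
  (forall e, 0 <= P e) -> \sum_e P e = 1 -> P (pid n) > 1/2 -> 0 < four P a.
Proof.
move=> H0 H1 Hp.
have E : four P a = 1 - \sum_e (1 - chi a e) * P e.
  rewrite -{1}H1 /four -sumrB; apply: eq_bigr => e _.
  by rewrite mulrBl mul1r opprB addrC subrK.
have Hle : \sum_e (1 - chi a e) * P e <= 2 * (\sum_e P e - P (pid n)).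
  rewrite (bigD1 (pid n)) //= chiC chi1 subrr mul0r add0r.
  rewrite [\sum_e P e](bigD1 (pid n)) //= addrC addrK big_distrr /=.
  apply: ler_sum => e _; apply: ler_wpM2r => //.
  rewrite /pair_sign; case: ifP => _; last by rewrite subrr.
  by rewrite opprK.
rewrite H1 in Hle.
rewrite E subr_gt0; apply: (le_lt_trans Hle).
lra.
Qed.


Lemma four_supp (g : {set 'I_n}) (h : Pauli n -> R) e :
  (forall a a0, (forall i, i \in g -> a0 i = (false,false)) -> h (pmul a a0) = h a) ->
  ~~ (supp e \subset g) -> four h e = 0.
Proof.
move=> Hh /subsetPn [i]; rewrite inE => Hi Hig.
have [a0 [Ha0 Hanti]] := exists_anti Hi.
have inj : injective (pmul a0) by move=> u v E; rewrite -(pmulK a0 u) E pmulK.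
have Hc : chi e a0 = -1 by rewrite /pair_sign anticommC Hanti.
set s := four h e.
have E : s = - s.
  rewrite {1}/s /four (reindex_inj inj) -sumrN; apply: eq_bigr => a _.
  rewrite chiMr Hc mulN1r mulNr pmulC Hh // => j Hj; apply: Ha0.
  by apply/eqP => Eji; move: Hig; rewrite -Eji Hj.
by move/eqP: E; rewrite -addr_eq0 -mulr2n -mulr_natr mulf_eq0 pnatr_eq0 orbF => /eqP.
Qed.

Lemma four_local (g : {set 'I_n}) (p : Pauli n -> R) a a0 :
  (forall e, ~~ (supp e \subset g) -> p e = 0) ->
  (forall i, i \in g -> a0 i = (false,false)) ->
  four p (pmul a a0) = four p a.
Proof.
move=> Hp Ha0; apply: eq_bigr => e _; rewrite chiMl.
have [Hs|Hs] := boolP (supp e \subset g); last by rewrite Hp // !mulr0.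
suff -> : chi a0 e = 1 by rewrite mulr1.
rewrite /pair_sign anticomm_disj // => i.
have [Hi|Hi] := boolP (i \in g); first by left; apply: Ha0.
right; apply/eqP/negPn/negP => Hei.
by move: Hi; rewrite (subsetP Hs) // inE.
Qed.

Lemma ln_prod (I : finType) (A : pred I) (F : I -> R) :
  0 < \prod_(i | A i) F i -> ln (\prod_(i | A i) F i) = \sum_(i | A i) ln `|F i|.
Proof.
move=> Hpos.
have nz : forall i, A i -> F i != 0.
  by apply/prodf_neq0; rewrite gt_eqF.
rewrite -[\prod_(i | A i) F i]gtr0_norm // normr_prod.
suff [] : 0 < \prod_(i | A i) `|F i| /\ ln (\prod_(i | A i) `|F i|) = \sum_(i | A i) ln `|F i| by [].
elim: (index_enum I) => [|i r [IH1 IH2]]; first by rewrite !big_nil ln1.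
rewrite !big_cons; case: ifP => Ai //.
have Fi : 0 < `|F i| by rewrite normr_gt0 nz.
by split; [exact: mulr_gt0 | rewrite lnM ?posrE // IH2].
Qed.

Lemma four_sum (I : finType) (A : pred I) (F : I -> Pauli n -> R) x :
  four (fun a => \sum_(i | A i) F i a) x = \sum_(i | A i) four (F i) x.
Proof.
rewrite /four; under eq_bigr => a _ do rewrite big_distrr.
by rewrite exchange_big.
Qed.

Lemma four_sub (u v : Pauli n -> R) x :
  four (fun a => u a - v a) x = four u x - four v x.
Proof. by rewrite /four -sumrB; apply: eq_bigr => a _; rewrite mulrBr. Qed.

Lemma four_ext (u v : Pauli n -> R) x : u =1 v -> four u x = four v x.
Proof. by move=> E; apply: eq_bigr => a _; rewrite E. Qed.

Lemma perp_mul (H : {set Pauli n}) a b :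
  a \in perp H -> b \in perp H -> pmul a b \in perp H.
Proof.
rewrite !inE => /forallP Ha /forallP Hb; apply/forallP => c.
apply/implyP => Hc; rewrite anticommMl.
by move: (Ha c) (Hb c); rewrite Hc /= => /negPf -> /negPf ->.
Qed.

Lemma perp_id (H : {set Pauli n}) : pid n \in perp H.
Proof. by rewrite inE; apply/forallP => b; rewrite anticomm1 implybT. Qed.

Lemma sum_logical (S : {set Pauli n}) (f : Pauli n -> R) e :
  \sum_(s in S) f (pmul e s) =
  NN^-1 * \sum_a (four f a * chi a e * \sum_(s in S) chi a s).
Proof.
under eq_bigr => s _ do rewrite (four_inv f (pmul e s)).
rewrite -big_distrr; congr (_ * _).
rewrite exchange_big; apply: eq_bigr => a _.
rewrite big_distrr; apply: eq_bigr => s _.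
by rewrite /= chiMr mulrC mulrA.
Qed.

Lemma coset_zero (S : {set Pauli n}) (G : Pauli n -> R) :
  pid n \in S -> (forall a b, a \in S -> b \in S -> pmul a b \in S) ->
  (forall s, s \in S -> G s = 0) ->
  forall x, \sum_e (if pmul x e \in perp S then four G e else 0) = 0.
Proof.
move=> S1 SM HG x.
have : \sum_(s in S) chi x s * G s = 0 by rewrite big1 // => s Hs; rewrite HG ?mulr0.
have E : \sum_(s in S) chi x s * G s =
    NN^-1 * \sum_e four G e * \sum_(s in S) chi (pmul x e) s.
  under eq_bigr => s _ do rewrite (four_inv G s) mulrCA big_distrr.
  rewrite -big_distrr /= exchange_big; congr (_ * _); apply: eq_bigr => e _.
  rewrite big_distrr; apply: eq_bigr => s _ /=.
  rewrite chiMl; ring.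
rewrite E => /eqP; rewrite mulf_eq0 invr_eq0 (negPf NN_neq0) /= => /eqP.
under eq_bigr => e _ do rewrite (chi_sum _ S1 SM).
move=> E2.
have HS : (#|S|%:R : R) != 0 by rewrite pnatr_eq0 -lt0n; apply/card_gt0P; exists (pid n).
apply: (mulIf HS); rewrite mul0r big_distrl -[in RHS]E2; apply: eq_bigr => e _.
by case: ifP => _ /=; rewrite ?mul0r ?mulr0.
Qed.


Lemma chan_pos (Gamma : {set {set 'I_n}}) (Pg : {set 'I_n} -> Pauli n -> R) :
  local_family Gamma Pg -> conv_family Gamma Pg (pid n) > 1/2 ->
  forall a, 0 < four (conv_family Gamma Pg) a.
Proof.
move=> Hloc Hp a; apply: four_pos => //.
  by apply: family_ge0 => g Hg; have [[H0 _] _] := Hloc g Hg.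
transitivity (four (conv_family Gamma Pg) (pid n)).
  by apply: eq_bigr => e _; rewrite chi1 mul1r.
rewrite four_family big1 // => g Hg; have [[_ H1] _] := Hloc g Hg.
by rewrite -H1; apply: eq_bigr => e _; rewrite chi1 mul1r.
Qed.

Lemma log_decomp (Gamma : {set {set 'I_n}}) (Pg : {set 'I_n} -> Pauli n -> R) :
  (forall a, 0 < four (conv_family Gamma Pg) a) ->
  forall a, ln (four (conv_family Gamma Pg) a) = \sum_(g in Gamma) ln `|four (Pg g) a|.
Proof. by move=> Hp a; rewrite four_family; apply: ln_prod; rewrite -four_family. Qed.

Lemma h_local (g : {set 'I_n}) (p : Pauli n -> R) e :
  (forall e, ~~ (supp e \subset g) -> p e = 0) -> ~~ (supp e \subset g) ->
  four (fun a => ln `|four p a|) e = 0.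
Proof.
move=> Hp He; apply: (four_supp (g := g)) => // a a0 Ha0.
by rewrite (four_local (g := g)).
Qed.

Lemma key (S : {set Pauli n}) (Gamma : {set {set 'I_n}}) (Pg Pg' : {set 'I_n} -> Pauli n -> R) :
  is_subgroup S -> correctable_channel S Gamma Pg -> correctable_channel S Gamma Pg' ->
  (forall s, s \in S -> four (conv_family Gamma Pg) s = four (conv_family Gamma Pg') s) ->
  forall l, l \in perp S -> four (conv_family Gamma Pg) l = four (conv_family Gamma Pg') l.
Proof.
move=> [S1 SM] [Hloc [Hcor Hp]] [Hloc' [_ Hp']] Hexp l Hl.
have Pp := chan_pos Hloc Hp; have Pp' := chan_pos Hloc' Hp'.
pose G := fun a => \sum_(g in Gamma) (ln `|four (Pg g) a| - ln `|four (Pg' g) a|).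
have HGe : forall a, G a = ln (four (conv_family Gamma Pg) a) - ln (four (conv_family Gamma Pg') a).
  by move=> a; rewrite /G sumrB !log_decomp.
have HGS : forall s, s \in S -> G s = 0 by move=> s Hs; rewrite HGe Hexp // subrr.
pose Ep e' := [exists g in Gamma, supp e' \subset g].
have Hsupp : forall e, four G e != 0 -> Ep e.
  move=> e; apply: contraR => HnE; rewrite /G four_sum big1 // => g Hg.
  have Hng : ~~ (supp e \subset g).
    by apply/negP => H; move/negP: HnE; apply; apply/existsP; exists g; rewrite Hg H.
  have Z1 : forall e0, ~~ (supp e0 \subset g) -> Pg g e0 = 0 by have [_ H] := Hloc g Hg.
  have Z2 : forall e0, ~~ (supp e0 \subset g) -> Pg' g e0 = 0 by have [_ H] := Hloc' g Hg.
  by rewrite four_sub (h_local Z1 Hng) (h_local Z2 Hng) subrr.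
have HC := coset_zero S1 SM HGS.
have Gl : G l = 0.
  rewrite (four_inv G l).
  suff -> : \sum_a chi a l * four G a = 0 by rewrite mulr0.
  pose r x := odflt (pid n) [pick e' | Ep e' && (pmul x e' \in perp S)].
  pose psi x := chi (r x) l.
  have A : forall e, four G e != 0 -> chi e l = psi e.
    move=> e /Hsupp Ee; rewrite /psi /r; case: pickP => [e' /andP [Ee' He'] | Hn] /=; last first.
      by move: (Hn e); rewrite Ee pmulxx perp_id.
    move/existsP: Ee => [g /andP [Hg Hge]]; move/existsP: Ee' => [g' /andP [Hg' Hge']].
    have Hs : pmul e e' \in S.
      apply: (Hcor g g' Hg Hg' _ He').
      by apply: subset_trans (supp_pmul e e') _; apply: setUSS.
    move: Hl; rewrite inE => /forallP/(_ (pmul e e')); rewrite Hs /= anticommMr => Hx.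
    rewrite /pair_sign (anticommC e) (anticommC e').
    by move: Hx; case: (anticomm l e); case: (anticomm l e').
  have B : forall x y, pmul x y \in perp S -> psi x = psi y.
    move=> x y Hxy; rewrite /psi /r.
    rewrite (@eq_pick _ _ (fun e' => Ep e' && (pmul y e' \in perp S))) // => e' /=.
    congr (_ && _); apply/idP/idP => H.
      have -> : pmul y e' = pmul (pmul x y) (pmul x e').
        apply/ffunP => i; rewrite !ffunE /=.
        by case: (x i) => [[] []]; case: (y i) => [[] []]; case: (e' i) => [[] []].
      exact: perp_mul.
    have -> : pmul x e' = pmul (pmul x y) (pmul y e').
      apply/ffunP => i; rewrite !ffunE /=.
      by case: (x i) => [[] []]; case: (y i) => [[] []]; case: (e' i) => [[] []].
    exact: perp_mul.
  have C : \sum_a chi a l * four G a = \sum_a psi a * four G a.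
    apply: eq_bigr => a _; have [->|Hn] := eqVneq (four G a) 0; first by rewrite !mulr0.
    by rewrite A.
  have HM : (#|perp S|%:R : R) != 0.
    by rewrite pnatr_eq0 -lt0n; apply/card_gt0P; exists (pid n); exact: perp_id.
  have D : forall e, \sum_x (if pmul x e \in perp S then psi x else 0) = #|perp S|%:R * psi e.
    move=> e; have inj : injective (pmul e) by move=> u v E; rewrite -(pmulK e u) E pmulK.
    rewrite (reindex_inj inj) /=.
    transitivity (\sum_x (if x \in perp S then psi e else 0)).
      apply: eq_bigr => x _; rewrite (pmulC (pmul e x)) pmulK; case: ifP => Hx //.
      by apply: B; rewrite pmulC pmulK.
    by rewrite -big_mkcond sumr_const mulr_natl.
  rewrite C; apply: (mulfI HM); rewrite mulr0 big_distrr /=.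
  transitivity (\sum_a four G a * \sum_x (if pmul x a \in perp S then psi x else 0)).
    by apply: eq_bigr => a _; rewrite D /=; ring.
  under eq_bigr => a _ do rewrite big_distrr.
  rewrite exchange_big big1 // => x _ /=.
  rewrite -[RHS](mulr0 (psi x)) -[in RHS](HC x) big_distrr; apply: eq_bigr => a _.
  by case: ifP => _ /=; rewrite ?mulr0 ?mul0r // mulrC.
apply: ln_inj; rewrite ?posrE //.
by apply/eqP; rewrite -subr_eq0 -HGe Gl.
Qed.

End Fourier.

Theorem theorem1 (R : realType) (n : nat) (S : {set Pauli n})
  (Gamma : {set {set 'I_n}}) (Pg Pg' : {set 'I_n} -> Pauli n -> R) :
  stabilizer_group S ->
  correctable_channel S Gamma Pg ->
  correctable_channel S Gamma Pg' ->
  (forall s, s \in S ->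
     stab_expect (conv_family Gamma Pg) s = stab_expect (conv_family Gamma Pg') s) ->
  forall e : Pauli n,
    logical_channel S (conv_family Gamma Pg) e = logical_channel S (conv_family Gamma Pg') e.
Proof.
move=> [Hsub _] HP HP' Hexp e.
have K := key Hsub HP HP' Hexp.
case: Hsub => S1 SM.
rewrite /logical_channel; congr (_ * _); rewrite !sum_logical; congr (_ * _).
apply: eq_bigr => a _; rewrite (@chi_sum R n S a S1 SM); case: ifP => Ha; last by rewrite !mulr0.
by rewrite K.
Qed.
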